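(* Let $A$ be a Banach lattice algebra. If $a,b\in BP_l(A)\cap BP_r(A)$, then $ab=ba$.
   Context: A Banach lattice algebra is a real Banach lattice $A$ with an associative bilinear product making it a Banach algebra such that $xy\ge0$ whenever $x,y\ge0$. $L_a(x)=ax$, $R_a(x)=xa$. A band projection on a Banach lattice $X$ is an operator $P$ with $P^2=P$, $0\le P\le I_X$. $BP_l(A)=\{a\in A_+: L_a\text{ is a band projection}\}$, $BP_r(A)=\{a\in A_+: R_a\text{ is a band projection}\}$. *)

(* Defs.v *)
From HB Require Import structures.
From mathcomp Require Import all_boot all_order all_algebra.
From mathcomp Require Import all_classical all_reals all_analysis.
Set Implicit Arguments. Unset Strict Implicit. Unset Printing Implicit Defensive.
Import Order.TTheory GRing.Theory Num.Theory.
Import numFieldNormedType.Exports.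
Local Open Scope ring_scope.

Section BLA.
Variables (R : realType) (V : completeNormedModType R).
Variables (le : V -> V -> Prop) (join : V -> V -> V) (mul : V -> V -> V).

Definition vector_lattice : Prop :=
  (forall x, le x x) /\
  [/\ (forall x y, le x y -> le y x -> x = y),
      (forall x y z, le x y -> le y z -> le x z),
      (forall x y z, le x y -> le (x + z) (y + z)),
      (forall (r : R) x y, 0 <= r -> le x y -> le (r *: x) (r *: y)) &
      (forall x y, [/\ le x (join x y), le y (join x y) &
                     forall z, le x z -> le y z -> le (join x y) z])].

Definition lattice_abs (x : V) : V := join x (- x).

Definition banach_lattice : Prop :=
  vector_lattice /\
  (forall x y, le (lattice_abs x) (lattice_abs y) -> `|x| <= `|y|).

Definition banach_lattice_algebra : Prop :=
  banach_lattice /\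
  [/\ (forall x y z, mul x (mul y z) = mul (mul x y) z),
       (forall x y z, mul (x + y) z = mul x z + mul y z),
       (forall x y z, mul x (y + z) = mul x y + mul x z),
       (forall (r : R) x y, mul (r *: x) y = r *: mul x y) &
       (forall (r : R) x y, mul x (r *: y) = r *: mul x y)] /\
  (forall x y, `|mul x y| <= `|x| * `|y|) /\
  (forall x y, le 0 x -> le 0 y -> le 0 (mul x y)).

Definition band_projection (P : V -> V) : Prop :=
  [/\ (forall x y, P (x + y) = P x + P y),
      (forall (r : R) x, P (r *: x) = r *: P x),
      (forall x, P (P x) = P x),
      (forall x, le 0 x -> le 0 (P x)) &
      (forall x, le 0 x -> le (P x) x)].

Definition BP_l : V -> Prop :=
  fun a => le 0 a /\ band_projection (fun x => mul a x).
Definition BP_r : V -> Prop :=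
  fun a => le 0 a /\ band_projection (fun x => mul x a).

End BLA.

(* Main.v *)
Require Import Defs.
From HB Require Import structures.
From mathcomp Require Import all_boot all_order all_algebra.
From mathcomp Require Import all_classical all_reals all_analysis.
Import Order.TTheory GRing.Theory Num.Theory.
Import numFieldNormedType.Exports.
Local Open Scope ring_scope.

Theorem mainTheorem17 (R : realType) (V : completeNormedModType R)
  (le : V -> V -> Prop) (join : V -> V -> V) (mul : V -> V -> V)
  (HA : banach_lattice_algebra le join mul) (a b : V) :
  BP_l le mul a -> BP_r le mul a ->
  BP_l le mul b -> BP_r le mul b ->
  mul a b = mul b a.
Proof.
move: HA => [[[Hrefl [Hanti Htrans Hadd Hscal Hjoin]] _] [[Hass HdL HdR _ _] [_ Hpos]]].
move=> [Ha0 [LaD _ LaI LaP LaL]] [_ [RaD _ RaI RaP RaL]].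
move=> [Hb0 [_ _ _ _ LbL]] [_ [_ _ _ _ RbL]].
have mulN_l : forall x y, mul (- x) y = - mul x y.
  move=> x y; have m0 : mul 0 y = 0.
    by apply: (addrI (mul 0 y)); rewrite -HdL !addr0.
  by apply/eqP; rewrite -addr_eq0 -HdL addNr m0.
have mulN_r : forall x y, mul x (- y) = - mul x y.
  move=> x y; have m0 : mul x 0 = 0.
    by apply: (addrI (mul x 0)); rewrite -HdR !addr0.
  by apply/eqP; rewrite -addr_eq0 -HdR addNr m0.
have mulB_l : forall x y z, mul (x - y) z = mul x z - mul y z.
  by move=> x y z; rewrite HdL mulN_l.
have mulB_r : forall x y z, mul z (x - y) = mul z x - mul z y.
  by move=> x y z; rewrite HdR mulN_r.
have le_sub0 : forall x y, le x y -> le 0 (y - x).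
  by move=> x y h; have := Hadd _ _ (- x) h; rewrite subrr.
have sub0_le : forall x y, le 0 (y - x) -> le x y.
  by move=> x y h; have := Hadd _ _ x h; rewrite add0r subrK.
have le_subl : forall x y, le 0 y -> le (x - y) x.
  by move=> x y h; have := Hadd _ _ (x - y) h; rewrite add0r (addrC y) subrK.
have le_sub_sym : forall x y, le (x - y) x -> le 0 y.
  by move=> x y h; have := le_sub0 _ _ h; rewrite opprB addrC subrK.
have le_sub_neg : forall x y, le x (x - y) -> le y 0.
  move=> x y h; have := Hadd _ _ (y - x) h.
  by rewrite addrC subrK addrA subrK subrr.
have E1 : mul a b = mul (mul a b) a.
  set u := mul a b - mul (mul a b) a.
  have u0 : le 0 u by apply: le_sub0; apply: RaL; apply: (Hpos).
  have uua : mul a u = u.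
    by rewrite /u mulB_r LaI Hass LaI.
  have uaa : mul u a = 0.
    by rewrite /u mulB_l RaI subrr.
  have ua : le u a.
    apply: Htrans (RbL _ Ha0); apply: le_subl; apply: (Hpos) => //; exact: (Hpos).
  have h1 : le 0 (mul a a - u).
    by rewrite -{1}uua -mulB_r; apply: LaP; apply: le_sub0.
  have h2 := RaL _ h1.
  move: h2; rewrite mulB_l uaa subr0 RaI => h2.
  have h3 := le_sub_neg _ _ h2.
  apply/eqP; rewrite -subr_eq0; apply/eqP; exact: Hanti h3 _.
have E2 : mul b a = mul (mul a b) a.
  set v := mul b a - mul (mul a b) a.
  have v0 : le 0 v by rewrite /v -Hass; apply: le_sub0; apply: LaL; exact: (Hpos).
  have vva : mul v a = v.
    by rewrite /v mulB_l !RaI.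
  have vaa : mul a v = 0.
    by rewrite /v mulB_r (Hass a b a) (Hass a (mul a b) a) LaI subrr.
  have va : le v a.
    apply: Htrans (LbL _ Ha0); apply: le_subl; apply: (Hpos) => //; exact: (Hpos).
  have h1 : le 0 (mul a a - v).
    by rewrite -{1}vva -mulB_l; apply: RaP; apply: le_sub0.
  have h2 := LaL _ h1.
  move: h2; rewrite mulB_r vaa subr0 LaI => h2.
  have h3 := le_sub_neg _ _ h2.
  apply/eqP; rewrite -subr_eq0; apply/eqP; rewrite -/v; exact: (Hanti _ _ h3 v0).
exact: (etrans E1 (esym E2)).
Qed.
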